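(* Assume $1-p(n)\sim c/\ln n$ for some $c>0$, and write $p=p(n)$. Then $$\lim_{n\to\infty}\frac{Y^{(p)}_0(\tau_n)}{n}=(2+\beta){\rm e}^{-\alpha c}\quad\text{in probability},$$ where $\alpha=(1+\beta)/(2+\beta)$.
   Context: Fix $\beta>-1$, $p\in(0,1)$. Continuous-time preferential attachment: $T(0)$ is the single edge on $\{0,1\}$; when the current tree has vertex set $\{0,\dots,n\}$, each vertex $i$ has an independent exponential clock with parameter $d_n(i)+\beta$ ($d_n(i)$ its current degree), and at the first ring vertex $n+1$ is attached to the vertex whose clock rang. $T(t)$ is the tree at time $t$ and $\tau_n=\inf\{t\ge0:|T(t)|=n+1\}$. Each edge $e_j$ joining vertex $j\ge1$ to its parent carries an independent uniform$[0,1]$ mark $U_j$, independent of the growth; $e_j$ is intact if $U_j\le p$ and is cut otherwise, a cut edge being kept as two half-edges, one attached to each endpoint. $T^{(p)}_0(t)$ is the set of vertices connected to $0$ by intact edges, $H^{(p)}_0(t)$ the number of half-edges attached to its vertices, and $Y^{(p)}_0(t)=2(|T^{(p)}_0(t)|-1)+H^{(p)}_0(t)+\beta|T^{(p)}_0(t)|$. *)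

(* Defs.v *)
From Stdlib Require Import Reals List Arith.
Import ListNotations.
Open Scope R_scope.

(* A tree on vertices {0,...,n} is encoded by its parent list [ps] of length n:
   the parent of vertex j (1 <= j <= n) is [nth (j-1) ps 0]; the edge e_j joins
   j to its parent. *)
Definition parent (ps : list nat) (j : nat) : nat := nth (j - 1) ps 0%nat.

Definition deg (ps : list nat) (i : nat) : nat :=
  ((if Nat.eqb i 0 then 0 else 1) + length (filter (Nat.eqb i) ps))%nat.

(* Law of the tree T(tau_{k+1}) (vertex set {0,...,k+1}), as a finite list of
   (outcome, probability) pairs: the embedded jump chain of the continuous-time
   process.  From a tree on {0..m} (m = k'+1, m edges, total rate
   sum_i (d(i)+beta) = 2m + beta (m+1)), vertex m+1 attaches to i with
   probability (d(i)+beta)/(2m + beta(m+1)) (competing exponential clocks). *)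
Fixpoint tdist (beta : R) (k : nat) : list (list nat * R) :=
  match k with
  | O => [([0%nat], 1)]
  | S k' =>
      flat_map (fun pw =>
        map (fun i => (fst pw ++ [i],
                       snd pw * ((INR (deg (fst pw) i) + beta)
                                 / (INR (2 * (k' + 1)) + beta * INR (k' + 2)))))
            (seq 0 (k' + 2)))
        (tdist beta k')
  end.

(* Law of the intact/cut indicators of edges e_1..e_n: edge e_j is intact
   (U_j <= p) with probability p, independently; bs[j-1] = true iff e_j intact. *)
Fixpoint mdist (p : R) (n : nat) : list (list bool * R) :=
  match n with
  | O => [([], 1)]
  | S n' =>
      flat_map (fun bw => [(fst bw ++ [true], snd bw * p);
                           (fst bw ++ [false], snd bw * (1 - p))])
        (mdist p n')
  end.

Definition intact (bs : list bool) (j : nat) : bool := nth (j - 1) bs false.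

(* v is connected to 0 by intact edges (fuel-bounded; parents are smaller) *)
Fixpoint conn (ps : list nat) (bs : list bool) (fuel v : nat) : bool :=
  match fuel with
  | O => Nat.eqb v 0
  | S f => Nat.eqb v 0 || (intact bs v && conn ps bs f (parent ps v))
  end.

Definition inT0 (ps : list nat) (bs : list bool) (v : nat) : bool := conn ps bs v v.

Definition sizeT0 (ps : list nat) (bs : list bool) : nat :=
  length (filter (inT0 ps bs) (seq 0 (S (length ps)))).

(* H_0^{(p)}: half-edges of cut edges attached to vertices of T_0^{(p)} *)
Definition H0 (ps : list nat) (bs : list bool) : nat :=
  fold_right Nat.add 0%nat
    (map (fun j => if intact bs j then 0%nat
                   else ((if inT0 ps bs j then 1 else 0)
                         + (if inT0 ps bs (parent ps j) then 1 else 0))%nat)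
         (seq 1 (length ps))).

Definition Y0 (beta : R) (ps : list nat) (bs : list bool) : R :=
  2 * (INR (sizeT0 ps bs) - 1) + INR (H0 ps bs) + beta * INR (sizeT0 ps bs).

Definition sumR (l : list R) : R := fold_right Rplus 0 l.

Definition prob_at (beta q : R) (n : nat)
    (E : list nat -> list bool -> bool) : R :=
  sumR (map (fun pw =>
    sumR (map (fun bw => if E (fst pw) (fst bw) then snd pw * snd bw else 0)
              (mdist q (length (fst pw)))))
    (tdist beta (n - 1))).

Definition Rgtb (x y : R) : bool := if Rlt_dec y x then true else false.

(* Main.v *)
Require Import Defs.
From Stdlib Require Import Reals Lra Lia List Arith.
Import ListNotations.
Open Scope R_scope.


Lemma sumR_app l1 l2 : sumR (l1 ++ l2) = sumR l1 + sumR l2.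
Proof. induction l1; simpl; [lra|rewrite IHl1; lra]. Qed.

Lemma sumR_map_plus {A} (f g : A -> R) l :
  sumR (map (fun x => f x + g x) l) = sumR (map f l) + sumR (map g l).
Proof. induction l; simpl; [lra|rewrite IHl; lra]. Qed.

Lemma sumR_map_scal {A} (c : R) (f : A -> R) l :
  sumR (map (fun x => c * f x) l) = c * sumR (map f l).
Proof. induction l; simpl; [lra|rewrite IHl; lra]. Qed.

Lemma sumR_map_ext_in {A} (f g : A -> R) l :
  (forall x, In x l -> f x = g x) -> sumR (map f l) = sumR (map g l).
Proof. intros H; rewrite (map_ext_in f g l H); reflexivity. Qed.

Lemma sumR_map_le {A} (f g : A -> R) l :
  (forall x, In x l -> f x <= g x) -> sumR (map f l) <= sumR (map g l).
Proof.
  induction l; simpl; intros H; [lra|].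
  assert (f a <= g a) by (apply H; auto).
  assert (sumR (map f l) <= sumR (map g l)) by (apply IHl; auto). lra.
Qed.

Lemma sumR_flat_map {A B} (f : B -> R) (h : A -> list B) l :
  sumR (map f (flat_map h l)) = sumR (map (fun x => sumR (map f (h x))) l).
Proof. induction l; simpl; [lra|rewrite map_app, sumR_app, IHl; lra]. Qed.

Lemma sumR_exchange {A B} (f : A -> B -> R) l1 l2 :
  sumR (map (fun x => sumR (map (fun y => f x y) l2)) l1) =
  sumR (map (fun y => sumR (map (fun x => f x y) l1)) l2).
Proof.
  induction l1; simpl.
  - induction l2; simpl; [lra|rewrite <- IHl2; lra].
  - rewrite IHl1. rewrite <- sumR_map_plus. reflexivity.
Qed.

Lemma sumR_seq_S (f : nat -> R) s n :
  sumR (map f (seq s (S n))) = sumR (map f (seq s n)) + f (s + n)%nat.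
Proof. rewrite seq_S, map_app, sumR_app; simpl; lra. Qed.

Lemma sumR_delta (f : nat -> R) i s n :
  sumR (map (fun v => if Nat.eqb v i then f v else 0) (seq s n)) =
  if andb (Nat.leb s i) (Nat.ltb i (s + n)) then f i else 0.
Proof.
  revert s; induction n; intros s.
  - change (sumR (map (fun v => if Nat.eqb v i then f v else 0) (seq s 0))) with 0.
    destruct (Nat.leb_spec s i); destruct (Nat.ltb_spec i (s+0)); simpl; try lra; lia.
  - change (seq s (S n)) with (s :: seq (S s) n).
    change (sumR (map (fun v => if Nat.eqb v i then f v else 0) (s :: seq (S s) n)))
      with ((if Nat.eqb s i then f s else 0) + sumR (map (fun v => if Nat.eqb v i then f v else 0) (seq (S s) n))).
    rewrite IHn.
    destruct (Nat.eqb_spec s i); destruct (Nat.leb_spec (S s) i); destruct (Nat.leb_spec s i);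
    destruct (Nat.ltb_spec i (S s + n)); destruct (Nat.ltb_spec i (s + S n)); subst; simpl;
    try lia; try lra.
Qed.

Definition wf (ps : list nat) :=
  forall j, (1 <= j <= length ps)%nat -> (parent ps j < j)%nat.

Lemma parent_app ps i j : (1 <= j <= length ps)%nat -> parent (ps ++ [i]) j = parent ps j.
Proof. intros H; unfold parent; apply app_nth1; lia. Qed.

Lemma parent_last ps i : parent (ps ++ [i]) (S (length ps)) = i.
Proof. unfold parent; simpl; rewrite Nat.sub_0_r, app_nth2 by lia; rewrite Nat.sub_diag; reflexivity. Qed.

Lemma intact_app bs b j : (1 <= j <= length bs)%nat -> intact (bs ++ [b]) j = intact bs j.
Proof. intros H; unfold intact; apply app_nth1; lia. Qed.

Lemma intact_last bs b : intact (bs ++ [b]) (S (length bs)) = b.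
Proof. unfold intact; simpl; rewrite Nat.sub_0_r, app_nth2 by lia; rewrite Nat.sub_diag; reflexivity. Qed.

Lemma wf_app ps i : wf ps -> (i <= length ps)%nat -> wf (ps ++ [i]).
Proof.
  intros W Hi j Hj. rewrite length_app in Hj; simpl in Hj.
  destruct (Nat.eq_dec j (S (length ps))) as [->|Hn].
  - rewrite parent_last; lia.
  - rewrite parent_app by lia. apply W; lia.
Qed.

Lemma wf_in ps x : wf ps -> In x ps -> (x < length ps)%nat.
Proof.
  intros W Hx. destruct (In_nth ps x 0%nat Hx) as [idx [Hidx Hn]].
  assert (parent ps (S idx) = x) by (unfold parent; simpl; rewrite Nat.sub_0_r; auto).
  specialize (W (S idx)); lia.
Qed.

Lemma conn_S ps bs f v :
  conn ps bs (S f) v = orb (Nat.eqb v 0) (andb (intact bs v) (conn ps bs f (parent ps v))).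
Proof. reflexivity. Qed.

Lemma conn_app ps bs i b : wf ps -> length bs = length ps ->
  forall f v, (v <= length ps)%nat -> conn (ps ++ [i]) (bs ++ [b]) f v = conn ps bs f v.
Proof.
  intros W L f; induction f; intros v Hv; [reflexivity|].
  rewrite !conn_S. destruct (Nat.eqb v 0) eqn:E; [reflexivity|].
  apply Nat.eqb_neq in E.
  rewrite intact_app by lia. rewrite parent_app by lia.
  rewrite IHf; [reflexivity|]. specialize (W v); lia.
Qed.

Lemma conn_fuel ps bs : wf ps ->
  forall f1 f2 v, (v <= f1)%nat -> (v <= f2)%nat -> (v <= length ps)%nat ->
  conn ps bs f1 v = conn ps bs f2 v.
Proof.
  intros W f1; induction f1; intros f2 v H1 H2 H3.
  - assert (v = 0%nat) by lia; subst. destruct f2; reflexivity.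
  - destruct f2.
    + assert (v = 0%nat) by lia; subst. reflexivity.
    + rewrite !conn_S. destruct (Nat.eqb v 0) eqn:E; [reflexivity|].
      apply Nat.eqb_neq in E. specialize (W v).
      rewrite (IHf1 f2); [reflexivity| lia | lia | lia].
Qed.

Lemma inT0_app ps bs i b v : wf ps -> length bs = length ps -> (v <= length ps)%nat ->
  inT0 (ps ++ [i]) (bs ++ [b]) v = inT0 ps bs v.
Proof. intros; unfold inT0; apply conn_app; auto. Qed.

Lemma inT0_new ps bs i b : wf ps -> length bs = length ps -> (i <= length ps)%nat ->
  inT0 (ps ++ [i]) (bs ++ [b]) (S (length ps)) = andb b (inT0 ps bs i).
Proof.
  intros W L Hi. unfold inT0. rewrite conn_S. simpl (Nat.eqb (S _) 0).
  replace (intact (bs ++ [b]) (S (length ps))) with b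
    by (rewrite <- L; symmetry; apply intact_last).
  rewrite parent_last, conn_app by auto. simpl. f_equal. apply conn_fuel; auto.
Qed.


Lemma sizeT0_app ps bs i b : wf ps -> length bs = length ps -> (i <= length ps)%nat ->
  sizeT0 (ps ++ [i]) (bs ++ [b]) =
  (sizeT0 ps bs + (if andb b (inT0 ps bs i) then 1 else 0))%nat.
Proof.
  intros W L Hi. unfold sizeT0. rewrite length_app.
  replace (S (length ps + length [i])) with (S (S (length ps))) by (simpl; lia).
  rewrite (seq_S (S (length ps)) 0), filter_app, length_app. simpl (0 + _)%nat.
  f_equal.
  - f_equal. apply filter_ext_in. intros v Hv. apply in_seq in Hv.
    apply inT0_app; auto; lia.
  - cbn [filter]. rewrite inT0_new by auto. destruct (andb b (inT0 ps bs i)); reflexivity.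
Qed.

Lemma fold_add_app l1 l2 :
  fold_right Nat.add 0%nat (l1 ++ l2) = (fold_right Nat.add 0%nat l1 + fold_right Nat.add 0%nat l2)%nat.
Proof. induction l1; simpl; lia. Qed.

Lemma H0_app ps bs i b : wf ps -> length bs = length ps -> (i <= length ps)%nat ->
  H0 (ps ++ [i]) (bs ++ [b]) =
  (H0 ps bs + (if b then 0 else if inT0 ps bs i then 1 else 0))%nat.
Proof.
  intros W L Hi. unfold H0. rewrite length_app.
  replace (length ps + length [i])%nat with (S (length ps)) by (simpl; lia).
  rewrite seq_S, map_app, fold_add_app.
  f_equal.
  - f_equal. apply map_ext_in. intros j Hj. apply in_seq in Hj.
    rewrite intact_app by lia. rewrite parent_app by lia.
    rewrite (inT0_app ps bs i b j) by (auto; lia).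
    rewrite (inT0_app ps bs i b (parent ps j)) by (auto; specialize (W j); lia).
    reflexivity.
  - replace (1 + length ps)%nat with (S (length ps)) by lia.
    simpl. replace (intact (bs ++ [b]) (S (length ps))) with b
      by (rewrite <- L; symmetry; apply intact_last).
    rewrite inT0_new, parent_last by auto.
    rewrite (inT0_app ps bs i b i) by auto.
    destruct b; simpl; lia.
Qed.

Lemma Y0_app beta ps bs i b : wf ps -> length bs = length ps -> (i <= length ps)%nat ->
  Y0 beta (ps ++ [i]) (bs ++ [b]) =
  Y0 beta ps bs + (if inT0 ps bs i then 1 else 0) * (if b then 2 + beta else 1).
Proof.
  intros W L Hi. unfold Y0. rewrite sizeT0_app, H0_app by auto.
  rewrite !plus_INR.
  destruct b; destruct (inT0 ps bs i); simpl; ring.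
Qed.

Lemma deg_app ps i v : deg (ps ++ [i]) v = (deg ps v + (if Nat.eqb v i then 1 else 0))%nat.
Proof.
  unfold deg. rewrite filter_app, length_app. simpl.
  destruct (Nat.eqb v i); simpl; lia.
Qed.

Lemma filter_nil_eq l v : (forall x, In x l -> x <> v) -> filter (Nat.eqb v) l = [].
Proof.
  induction l; simpl; intros H; auto.
  destruct (Nat.eqb_spec v a). { exfalso; apply (H a); auto. }
  apply IHl; auto.
Qed.

Lemma deg_new ps i : wf ps -> (i <= length ps)%nat -> deg (ps ++ [i]) (S (length ps)) = 1%nat.
Proof.
  intros W Hi. unfold deg. rewrite filter_nil_eq; [reflexivity|].
  intros x Hx. apply in_app_or in Hx. destruct Hx as [Hx|Hx].
  - apply (wf_in ps x W) in Hx. lia.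
  - destruct Hx as [<-|[]]. lia.
Qed.

Lemma GenSum beta (h : nat -> R) ps i : wf ps -> (i <= length ps)%nat ->
  sumR (map (fun v => h v * (INR (deg (ps ++ [i]) v) + beta)) (seq 0 (S (length (ps ++ [i]))))) =
  sumR (map (fun v => h v * (INR (deg ps v) + beta)) (seq 0 (S (length ps))))
  + h i + h (S (length ps)) * (1 + beta).
Proof.
  intros W Hi. rewrite length_app.
  replace (length ps + length [i])%nat with (S (length ps)) by (simpl; lia).
  rewrite sumR_seq_S. simpl (0 + S _)%nat. rewrite deg_new by auto.
  assert (E: sumR (map (fun v => h v * (INR (deg (ps ++ [i]) v) + beta)) (seq 0 (S (length ps))))
    = sumR (map (fun v => h v * (INR (deg ps v) + beta)) (seq 0 (S (length ps))))
      + sumR (map (fun v => if Nat.eqb v i then h v else 0) (seq 0 (S (length ps))))).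
  { rewrite <- sumR_map_plus. apply sumR_map_ext_in. intros v _.
    rewrite deg_app, plus_INR. destruct (Nat.eqb v i); simpl; ring. }
  rewrite E, sumR_delta.
  replace (andb (Nat.leb 0 i) (Nat.ltb i (0 + S (length ps)))) with true
    by (symmetry; apply andb_true_intro; split; [apply Nat.leb_le|apply Nat.ltb_lt]; lia).
  simpl (INR 1). ring.
Qed.


Definition Vd (beta : R) (k : nat) : R := INR (2 * (k + 1)) + beta * INR (k + 2).

Lemma Vd_eq beta k : Vd beta k = (2 + beta) * (INR k + 1) + beta.
Proof. unfold Vd. rewrite mult_INR, !plus_INR. simpl. ring. Qed.

Lemma Vd_pos beta k : beta > -1 -> 0 < Vd beta k.
Proof. intros Hb. rewrite Vd_eq. pose proof (pos_INR k). nra. Qed.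

Definition Inv (beta : R) (ps : list nat) :=
  wf ps /\ (forall v, (v <= length ps)%nat -> (1 <= deg ps v)%nat) /\
  sumR (map (fun v => 1 * (INR (deg ps v) + beta)) (seq 0 (S (length ps))))
   = INR (2 * length ps) + beta * INR (S (length ps)).

Lemma Inv_app beta ps i : Inv beta ps -> (i <= length ps)%nat -> Inv beta (ps ++ [i]).
Proof.
  intros [W [D SS]] Hi. split; [|split].
  - apply wf_app; auto.
  - intros v Hv. rewrite length_app in Hv; simpl in Hv.
    destruct (Nat.eq_dec v (S (length ps))) as [->|Hn].
    + rewrite deg_new by auto; lia.
    + rewrite deg_app. specialize (D v); lia.
  - rewrite (GenSum beta (fun _ => 1)) by auto. rewrite SS.
    rewrite length_app. simpl length. rewrite !mult_INR, !S_INR, plus_INR. simpl. ring.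
Qed.

Lemma tdist_supp beta : beta > -1 -> forall k pw, In pw (tdist beta k) ->
  length (fst pw) = S k /\ Inv beta (fst pw) /\ 0 <= snd pw.
Proof.
  intros Hb k; induction k; intros pw Hpw.
  - simpl in Hpw. destruct Hpw as [<-|[]]. simpl. split; [reflexivity|split; [|lra]].
    split; [|split].
    + intros j Hj. simpl in Hj. assert (j = 1%nat) by lia; subst. unfold parent; simpl; lia.
    + intros v Hv. simpl in Hv. destruct v as [|[|]]; unfold deg; simpl; lia.
    + unfold deg; simpl. ring.
  - simpl in Hpw. apply in_flat_map in Hpw. destruct Hpw as [pw0 [H0 H1]].
    apply in_map_iff in H1. destruct H1 as [i [<- Hi]]. apply in_seq in Hi.
    destruct (IHk pw0 H0) as [L [I P]]. simpl.
    split; [rewrite length_app, L; simpl; lia|split].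
    + apply Inv_app; auto; lia.
    + apply Rmult_le_pos; auto. destruct I as [_ [D _]].
      assert (1 <= deg (fst pw0) i)%nat by (apply D; lia).
      apply le_INR in H. simpl in H. pose proof (Vd_pos beta k Hb). unfold Vd in H1.
      replace (k + 1 + (k + 1 + 0))%nat with (2 * (k+1))%nat by lia.
      unfold Rdiv; apply Rmult_le_pos; [lra|]; left; apply Rinv_0_lt_compat; lra.
Qed.

Lemma mdist_supp q : 0 <= q <= 1 -> forall n bw, In bw (mdist q n) ->
  length (fst bw) = n /\ 0 <= snd bw.
Proof.
  intros Hq n; induction n; intros bw Hbw.
  - simpl in Hbw. destruct Hbw as [<-|[]]. simpl; split; auto; lra.
  - simpl in Hbw. apply in_flat_map in Hbw. destruct Hbw as [bw0 [H0 H1]].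
    destruct (IHn bw0 H0) as [L P].
    simpl in H1. destruct H1 as [<-|[<-|[]]]; simpl; rewrite length_app, L; simpl;
      (split; [lia|]); apply Rmult_le_pos; lra.
Qed.

Definition Sw (beta : R) ps bs :=
  sumR (map (fun v => (if inT0 ps bs v then 1 else 0) * (INR (deg ps v) + beta))
            (seq 0 (S (length ps)))).

Lemma Y0_Sw beta : beta > -1 -> forall k pw, In pw (tdist beta k) ->
  forall bs, length bs = S k -> Y0 beta (fst pw) bs = Sw beta (fst pw) bs.
Proof.
  intros Hb k; induction k; intros pw Hpw bs Lb.
  - simpl in Hpw. destruct Hpw as [<-|[]]. simpl.
    destruct bs as [|b [|]]; simpl in Lb; try lia.
    destruct b; unfold Y0, Sw, sizeT0, H0, inT0, deg, intact, parent; simpl; ring.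
  - pose proof (tdist_supp beta Hb (S k) pw Hpw) as [_ [_ _]].
    simpl in Hpw. apply in_flat_map in Hpw. destruct Hpw as [pw0 [H0 H1]].
    apply in_map_iff in H1. destruct H1 as [i [<- Hi]]. apply in_seq in Hi. simpl fst.
    destruct (tdist_supp beta Hb k pw0 H0) as [L [[W _] _]].
    destruct (exists_last (l:=bs)) as [bs0 [b ->]].
    { intros ->; simpl in Lb; lia. }
    rewrite length_app in Lb; simpl in Lb.
    assert (Lb0 : length bs0 = length (fst pw0)) by lia.
    rewrite Y0_app by (auto; lia). rewrite (IHk pw0 H0 bs0) by lia.
    unfold Sw. rewrite GenSum by (auto; lia).
    rewrite inT0_new by (auto; lia). rewrite (inT0_app _ _ i b i) by (auto; lia).
    rewrite (sumR_map_ext_in (fun v => (if inT0 (fst pw0 ++ [i]) (bs0 ++ [b]) v then 1 else 0) * (INR (deg (fst pw0) v) + beta)) (fun v => (if inT0 (fst pw0) bs0 v then 1 else 0) * (INR (deg (fst pw0) v) + beta))).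
    2:{ intros v Hv. apply in_seq in Hv. rewrite inT0_app by (auto; lia). reflexivity. }
    destruct b; destruct (inT0 (fst pw0) bs0 i); simpl; ring.
Qed.


Definition EE (beta q : R) (k : nat) (F : list nat -> list bool -> R) : R :=
  sumR (map (fun pw => sumR (map (fun bw => snd pw * snd bw * F (fst pw) (fst bw))
                                 (mdist q (S k)))) (tdist beta k)).

Lemma tdist_S beta k : tdist beta (S k) =
  flat_map (fun pw => map (fun i => (fst pw ++ [i], snd pw * ((INR (deg (fst pw) i) + beta) / Vd beta k)))
                          (seq 0 (k + 2))) (tdist beta k).
Proof. reflexivity. Qed.

Lemma mdist_S q n : mdist q (S n) =
  flat_map (fun bw => [(fst bw ++ [true], snd bw * q); (fst bw ++ [false], snd bw * (1 - q))]) (mdist q n).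
Proof. reflexivity. Qed.

Lemma EE_step beta q k F : EE beta q (S k) F =
  EE beta q k (fun ps bs => sumR (map (fun i => (INR (deg ps i) + beta) / Vd beta k *
     (q * F (ps ++ [i]) (bs ++ [true]) + (1 - q) * F (ps ++ [i]) (bs ++ [false]))) (seq 0 (k + 2)))).
Proof.
  unfold EE. rewrite tdist_S, sumR_flat_map. apply sumR_map_ext_in. intros pw0 _.
  rewrite map_map. cbn [fst snd].
  transitivity (sumR (map (fun i => sumR (map (fun bw0 =>
     snd pw0 * snd bw0 * ((INR (deg (fst pw0) i) + beta) / Vd beta k *
     (q * F (fst pw0 ++ [i]) (fst bw0 ++ [true]) + (1 - q) * F (fst pw0 ++ [i]) (fst bw0 ++ [false]))))
     (mdist q (S k)))) (seq 0 (k + 2)))).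
  { apply sumR_map_ext_in; intros i _. rewrite mdist_S, sumR_flat_map.
    apply sumR_map_ext_in; intros bw0 _. cbn [map fst snd]. unfold sumR; cbn [fold_right]. ring. }
  rewrite sumR_exchange. apply sumR_map_ext_in; intros bw0 _.
  rewrite <- sumR_map_scal. reflexivity.
Qed.

Lemma EE_plus beta q k F G :
  EE beta q k (fun ps bs => F ps bs + G ps bs) = EE beta q k F + EE beta q k G.
Proof.
  unfold EE. rewrite <- sumR_map_plus. apply sumR_map_ext_in; intros pw _.
  rewrite <- sumR_map_plus. apply sumR_map_ext_in; intros bw _. ring.
Qed.

Lemma EE_scal beta q k c F :
  EE beta q k (fun ps bs => c * F ps bs) = c * EE beta q k F.
Proof.
  unfold EE. rewrite <- sumR_map_scal. apply sumR_map_ext_in; intros pw _.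
  rewrite <- sumR_map_scal. apply sumR_map_ext_in; intros bw _. ring.
Qed.

Lemma EE_ext beta q k F G :
  (forall pw bw, In pw (tdist beta k) -> In bw (mdist q (S k)) -> F (fst pw) (fst bw) = G (fst pw) (fst bw)) ->
  EE beta q k F = EE beta q k G.
Proof.
  intros H. unfold EE. apply sumR_map_ext_in; intros pw Hp.
  apply sumR_map_ext_in; intros bw Hb. rewrite H; auto.
Qed.

Lemma EE_mono beta q k F G : beta > -1 -> 0 <= q <= 1 ->
  (forall ps bs, F ps bs <= G ps bs) -> EE beta q k F <= EE beta q k G.
Proof.
  intros Hb Hq H. unfold EE. apply sumR_map_le; intros pw Hp.
  apply sumR_map_le; intros bw Hbw.
  destruct (tdist_supp beta Hb k pw Hp) as [_ [_ P1]].
  destruct (mdist_supp q Hq _ bw Hbw) as [_ P2].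
  apply Rmult_le_compat_l; [apply Rmult_le_pos; auto| apply H].
Qed.

Lemma stepsum beta k pw bs A B : beta > -1 -> In pw (tdist beta k) -> length bs = S k ->
  sumR (map (fun i => (INR (deg (fst pw) i) + beta) / Vd beta k *
        (A + (if inT0 (fst pw) bs i then 1 else 0) * B)) (seq 0 (k + 2)))
  = A + B * (Y0 beta (fst pw) bs / Vd beta k).
Proof.
  intros Hb Hp Lb.
  destruct (tdist_supp beta Hb k pw Hp) as [L [[W [D SS]] _]].
  pose proof (Vd_pos beta k Hb) as Vp.
  rewrite (sumR_map_ext_in _ (fun i => (A / Vd beta k) * (1 * (INR (deg (fst pw) i) + beta)) +
      (B / Vd beta k) * ((if inT0 (fst pw) bs i then 1 else 0) * (INR (deg (fst pw) i) + beta)))).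
  2:{ intros i _. field. lra. }
  rewrite sumR_map_plus, (sumR_map_scal (A / Vd beta k)), (sumR_map_scal (B / Vd beta k)).
  replace (k + 2)%nat with (S (length (fst pw))) by lia.
  rewrite SS. fold (Sw beta (fst pw) bs). rewrite <- (Y0_Sw beta Hb k pw Hp bs Lb).
  rewrite L. rewrite Vd_eq. rewrite mult_INR, !S_INR. simpl (INR 2).
  simpl (INR 0).   rewrite Vd_eq in Vp. field. lra.
Qed.

Lemma EE_one beta q k : beta > -1 -> EE beta q k (fun _ _ => 1) = 1.
Proof.
  intros Hb. induction k.
  - unfold EE. simpl. ring.
  - rewrite EE_step. transitivity (EE beta q k (fun _ _ => 1)); [|exact IHk]. apply EE_ext. intros pw bw Hp Hbw.
    assert (Hl : length (fst bw) = S k).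
    { unfold EE in *.
      clear IHk. revert bw Hbw. generalize (S k). intros n; induction n; intros bw Hbw.
      - simpl in Hbw. destruct Hbw as [<-|[]]. reflexivity.
      - rewrite mdist_S in Hbw. apply in_flat_map in Hbw. destruct Hbw as [bw0 [H0 H1]].
        simpl in H1. destruct H1 as [<-|[<-|[]]]; simpl; rewrite length_app, (IHn bw0 H0); simpl; lia. }
    rewrite (sumR_map_ext_in _ (fun i => (INR (deg (fst pw) i) + beta) / Vd beta k *
        (1 + (if inT0 (fst pw) (fst bw) i then 1 else 0) * 0))).
    2:{ intros i _. ring. }
    rewrite (stepsum beta k pw (fst bw)) by auto. ring.
Qed.


Lemma mdist_len q n bw : In bw (mdist q n) -> length (fst bw) = n.
Proof.
  revert bw; induction n; intros bw Hbw.
  - simpl in Hbw. destruct Hbw as [<-|[]]. reflexivity.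
  - rewrite mdist_S in Hbw. apply in_flat_map in Hbw. destruct Hbw as [bw0 [H0 H1]].
    simpl in H1. destruct H1 as [<-|[<-|[]]]; simpl; rewrite length_app, (IHn bw0 H0); simpl; lia.
Qed.

Definition aa beta q := q * (2 + beta) + (1 - q).
Definition bb beta q := q * (2 + beta) ^ 2 + (1 - q).

Fixpoint mm beta q k : R :=
  match k with
  | O => q * (2 + 2 * beta) + (1 - q) * (1 + beta)
  | S k' => mm beta q k' * (1 + aa beta q / Vd beta k')
  end.

Fixpoint ss beta q k : R :=
  match k with
  | O => q * (2 + 2 * beta) ^ 2 + (1 - q) * (1 + beta) ^ 2
  | S k' => ss beta q k' * (1 + 2 * aa beta q / Vd beta k') + bb beta q * mm beta q k' / Vd beta k'
  end.

Lemma Y0_base beta : Y0 beta [0%nat] [true] = 2 + 2 * beta /\ Y0 beta [0%nat] [false] = 1 + beta.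
Proof. unfold Y0, sizeT0, H0, inT0, intact, parent; simpl; split; ring. Qed.

Lemma step_prep beta q k pw bw i b : beta > -1 -> In pw (tdist beta k) -> In bw (mdist q (S k)) -> In i (seq 0 (k + 2)) ->
  Y0 beta (fst pw ++ [i]) (fst bw ++ [b]) =
  Y0 beta (fst pw) (fst bw) + (if inT0 (fst pw) (fst bw) i then 1 else 0) * (if b then 2 + beta else 1).
Proof.
  intros Hb Hp Hbw Hi. apply in_seq in Hi.
  destruct (tdist_supp beta Hb k pw Hp) as [L [[W _] _]].
  pose proof (mdist_len _ _ _ Hbw).
  apply Y0_app; auto; lia.
Qed.

Lemma EE_Y beta q k : beta > -1 ->
  EE beta q k (fun ps bs => Y0 beta ps bs) = mm beta q k.
Proof.
  intros Hb. induction k.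
  - unfold EE. simpl. destruct (Y0_base beta) as [E1 E2]. rewrite E1, E2. ring.
  - rewrite EE_step. simpl mm. rewrite <- IHk.
    transitivity (EE beta q k (fun ps bs => (1 + aa beta q / Vd beta k) * Y0 beta ps bs)).
    2:{ rewrite (EE_scal beta q k _ (fun ps bs => Y0 beta ps bs)). ring. }
    apply EE_ext. intros pw bw Hp Hbw.
    rewrite (sumR_map_ext_in _ (fun i => (INR (deg (fst pw) i) + beta) / Vd beta k *
        (Y0 beta (fst pw) (fst bw) + (if inT0 (fst pw) (fst bw) i then 1 else 0) * aa beta q))).
    2:{ intros i Hi. rewrite !(step_prep beta q k pw bw i) by auto. unfold aa.
        destruct (inT0 (fst pw) (fst bw) i); ring. }
    rewrite stepsum; auto. 2: apply (mdist_len q _ _ Hbw). unfold Rdiv. ring.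
Qed.

Lemma EE_Y2 beta q k : beta > -1 ->
  EE beta q k (fun ps bs => Y0 beta ps bs ^ 2) = ss beta q k.
Proof.
  intros Hb. induction k.
  - unfold EE. simpl. destruct (Y0_base beta) as [E1 E2]. rewrite E1, E2. ring.
  - rewrite EE_step. simpl ss. rewrite <- IHk, <- (EE_Y beta q k Hb).
    transitivity (EE beta q k (fun ps bs => (1 + 2 * aa beta q / Vd beta k) * Y0 beta ps bs ^ 2
                                    + (bb beta q / Vd beta k) * Y0 beta ps bs)).
    2:{ rewrite EE_plus, !EE_scal. change (EE beta q k (Y0 beta)) with (EE beta q k (fun ps bs => Y0 beta ps bs)). field. apply Rgt_not_eq, Vd_pos; auto. }
    apply EE_ext. intros pw bw Hp Hbw.
    rewrite (sumR_map_ext_in _ (fun i => (INR (deg (fst pw) i) + beta) / Vd beta k *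
        (Y0 beta (fst pw) (fst bw) ^ 2 + (if inT0 (fst pw) (fst bw) i then 1 else 0) *
          (2 * aa beta q * Y0 beta (fst pw) (fst bw) + bb beta q)))).
    2:{ intros i Hi. rewrite !(step_prep beta q k pw bw i) by auto. unfold aa, bb.
        destruct (inT0 (fst pw) (fst bw) i); ring. }
    rewrite stepsum; auto. 2: apply (mdist_len q _ _ Hbw). unfold Rdiv. ring.
Qed.


Definition mu beta q k := mm beta q k / Vd beta k.
Definition dd beta q k := ss beta q k / Vd beta k ^ 2 - mu beta q k ^ 2.
Fixpoint Hs beta k : R := match k with O => 0 | S k' => Hs beta k' + / Vd beta (S k') end.
Definition del beta q := (1 - q) * (1 + beta).

Lemma Vd_S beta k : Vd beta (S k) = Vd beta k + (2 + beta).
Proof. rewrite !Vd_eq, S_INR. ring. Qed.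

Lemma Vd_0 beta : Vd beta 0 = 2 + 2 * beta.
Proof. rewrite Vd_eq. simpl. ring. Qed.

Lemma Vd_ge1 beta k : beta > -1 -> 1 <= Vd beta (S k).
Proof. intros Hb. rewrite Vd_eq, S_INR. pose proof (pos_INR k). nra. Qed.

Lemma Vd_gt_del beta q k : beta > -1 -> 0 < q < 1 -> del beta q < Vd beta k.
Proof. intros Hb Hq. unfold del. rewrite Vd_eq. pose proof (pos_INR k). nra. Qed.

Lemma mu_0 beta q : beta > -1 -> mu beta q 0 = (1 + q) / 2.
Proof. intros Hb. unfold mu. simpl mm. rewrite Vd_0. field. lra. Qed.

Lemma mu_S beta q k : beta > -1 ->
  mu beta q (S k) = mu beta q k * (1 - del beta q / Vd beta (S k)).
Proof.
  intros Hb. unfold mu. simpl mm. pose proof (Vd_pos beta k Hb).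
  rewrite Vd_S. unfold aa, del. field. split; lra.
Qed.

Lemma mu_bounds beta q k : beta > -1 -> 0 < q < 1 -> 0 <= mu beta q k <= 1.
Proof.
  intros Hb Hq. induction k.
  - rewrite mu_0 by auto. lra.
  - rewrite mu_S by auto. pose proof (Vd_gt_del beta q (S k) Hb Hq).
    pose proof (Vd_pos beta (S k) Hb).
    assert (0 <= del beta q) by (unfold del; nra).
    assert (0 <= del beta q / Vd beta (S k) <= 1).
    { split. apply Rmult_le_pos; [lra| left; apply Rinv_0_lt_compat; lra].
      apply (Rmult_le_reg_r (Vd beta (S k))); [lra|]. unfold Rdiv.
      rewrite Rmult_assoc, Rinv_l by lra. lra. }
    nra.
Qed.

Lemma Hs_nonneg beta k : beta > -1 -> 0 <= Hs beta k.
Proof.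
  intros Hb; induction k; simpl; [lra|].
  pose proof (Vd_pos beta (S k) Hb). pose proof (Rinv_0_lt_compat _ H). lra.
Qed.

Lemma one_minus_mu beta q k : beta > -1 -> 0 < q < 1 ->
  1 - mu beta q k <= (1 - q) / 2 + del beta q * Hs beta k.
Proof.
  intros Hb Hq. induction k.
  - rewrite mu_0 by auto. simpl. lra.
  - rewrite mu_S by auto. simpl Hs.
    destruct (mu_bounds beta q k Hb Hq).
    pose proof (Vd_pos beta (S k) Hb).
    assert (0 <= del beta q) by (unfold del; nra).
    assert (0 <= del beta q / Vd beta (S k)).
    { apply Rmult_le_pos; [lra| left; apply Rinv_0_lt_compat; lra]. }
    replace (del beta q * (Hs beta k + / Vd beta (S k))) with
      (del beta q * Hs beta k + del beta q / Vd beta (S k)) by (unfold Rdiv; ring).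
    nra.
Qed.

Lemma EE_zero beta q k : EE beta q k (fun _ _ => 0) = 0.
Proof.
  transitivity (EE beta q k (fun ps bs => 0 * (fun _ _ => 1) ps bs)).
  - apply EE_ext; intros; ring.
  - rewrite EE_scal; ring.
Qed.

Lemma EE_nonneg beta q k F : beta > -1 -> 0 <= q <= 1 -> (forall ps bs, 0 <= F ps bs) ->
  0 <= EE beta q k F.
Proof. intros. rewrite <- (EE_zero beta q k). apply EE_mono; auto. Qed.

Lemma var_nonneg beta q k : beta > -1 -> 0 < q < 1 -> mm beta q k ^ 2 <= ss beta q k.
Proof.
  intros Hb Hq.
  assert (H : 0 <= EE beta q k (fun ps bs => (Y0 beta ps bs - mm beta q k) ^ 2)).
  { apply EE_nonneg; auto; [lra|]. intros. apply pow2_ge_0. }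
  rewrite (EE_ext beta q k _ (fun ps bs => (Y0 beta ps bs ^ 2 + (-2 * mm beta q k) * Y0 beta ps bs)
             + (mm beta q k ^ 2) * 1)) in H by (intros; ring).
  rewrite EE_plus, EE_plus, EE_scal, EE_scal, EE_one, EE_Y2 in H by auto.
  change (EE beta q k (fun ps bs => Y0 beta ps bs)) with (EE beta q k (fun ps bs => Y0 beta ps bs)) in H.
  rewrite EE_Y in H by auto. nra.
Qed.


Lemma dd_step beta q k : beta > -1 -> 0 < q < 1 ->
  dd beta q (S k) <= dd beta q k +
     (2 * (2 + beta) * del beta q + (2 + beta) ^ 2 * (1 - mu beta q k)) / Vd beta (S k) ^ 2.
Proof.
  intros Hb Hq.
  pose proof (mu_bounds beta q k Hb Hq) as Hmu.
  pose proof (var_nonneg beta q k Hb Hq) as Hv.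
  pose proof (Vd_pos beta k Hb) as HV.
  unfold dd, mu in *. simpl mm; simpl ss. rewrite Vd_S.
  unfold aa, bb, del.
  set (V := Vd beta k) in *. set (m := mm beta q k) in *. set (s := ss beta q k) in *.
  assert (He : (m / V) ^ 2 <= s / V ^ 2).
  { replace ((m / V) ^ 2) with (m ^ 2 / V ^ 2) by (field; lra).
    apply Rmult_le_compat_r; [|lra]. left; apply Rinv_0_lt_compat; nra. }
  assert (Hs : s = (s / V ^ 2) * V ^ 2) by (field; lra).
  assert (Hm : m = (m / V) * V) by (field; lra).
  set (u := m / V) in *. set (e := s / V ^ 2) in *.
  rewrite Hs, Hm. clearbody u e. clear Hs Hm Hv. clear m s.
  set (g := 2 + beta).
  assert (Hg : 1 < g) by (unfold g; lra).
  set (dl := (1 - q) * (1 + beta)).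
  assert (Hdl : 0 <= dl) by (unfold dl; nra).
  assert (Ha : q * g + (1 - q) = g - dl) by (unfold dl, g; ring).
  assert (Hbb : q * g ^ 2 + (1 - q) <= g ^ 2) by nra.
  assert (HP : (e - u ^ 2) * (V ^ 2 + 2 * (g - dl) * V - (V + g) ^ 2)
     + (q * g ^ 2 + (1 - q)) * u - (g - dl) ^ 2 * u ^ 2 - 2 * g * dl - g ^ 2 * (1 - u) <= 0).
  { assert (T1 : (e - u ^ 2) * (V ^ 2 + 2 * (g - dl) * V - (V + g) ^ 2) <= 0).
    { replace (V ^ 2 + 2 * (g - dl) * V - (V + g) ^ 2) with (- (2 * V * dl + g ^ 2)) by ring.
      assert (0 <= e - u ^ 2) by lra. assert (0 <= 2 * V * dl + g ^ 2) by nra. nra. }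
    assert (T2 : (q * g ^ 2 + (1 - q)) * u <= g ^ 2 * u) by nra.
    assert (T3 : 2 * g ^ 2 * u - (g - dl) ^ 2 * u ^ 2 - 2 * g * dl - g ^ 2 =
       - (g ^ 2 * (1 - u) ^ 2) - 2 * g * dl * (1 - u ^ 2) - dl ^ 2 * u ^ 2) by ring.
    assert (0 <= 2 * g * dl * (1 - u ^ 2)) by (apply Rmult_le_pos; nra).
    assert (0 <= g ^ 2 * (1 - u) ^ 2) by (apply Rmult_le_pos; apply pow2_ge_0).
    assert (0 <= dl ^ 2 * u ^ 2) by (apply Rmult_le_pos; apply pow2_ge_0).
    nra. }
  rewrite Ha. fold g.
  apply Rminus_le.
  match goal with |- ?L - ?R <= 0 =>
    replace (L - R) with (((e - u ^ 2) * (V ^ 2 + 2 * (g - dl) * V - (V + g) ^ 2)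
     + (q * g ^ 2 + (1 - q)) * u - (g - dl) ^ 2 * u ^ 2 - 2 * g * dl - g ^ 2 * (1 - u)) / (V + g) ^ 2)
  end.
  2:{ unfold g, dl. field. unfold g in Hg. lra. }
  unfold Rdiv. assert (0 < / (V + g) ^ 2) by (apply Rinv_0_lt_compat; nra).
  nra.
Qed.


Definition Phi beta q k :=
  dd beta q k + (2 * del beta q + (2 + beta) * (1 - q)) / Vd beta k
  + (2 + beta) * del beta q * (Hs beta k + / (2 + beta)) / Vd beta k.

Lemma Phi_step beta q k : beta > -1 -> 0 < q < 1 -> Phi beta q (S k) <= Phi beta q k.
Proof.
  intros Hb Hq. unfold Phi.
  pose proof (dd_step beta q k Hb Hq) as D.
  pose proof (one_minus_mu beta q k Hb Hq) as O.
  pose proof (Hs_nonneg beta k Hb) as HH.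
  pose proof (Vd_pos beta k Hb) as HV.
  simpl Hs. rewrite Vd_S in *.
  set (V := Vd beta k) in *. set (H := Hs beta k) in *.
  set (g := 2 + beta) in *. set (dl := del beta q) in *.
  assert (Hg : 1 < g) by (unfold g; lra).
  assert (Hdl : 0 <= dl) by (unfold dl, del; nra).
  set (x := / V). set (y := / (V + g)).
  assert (Hx : 0 < x) by (apply Rinv_0_lt_compat; lra).
  assert (Hy : 0 < y) by (apply Rinv_0_lt_compat; lra).
  assert (Hxy : x - y = g * x * y) by (unfold x, y; field; lra).
  assert (Hyx : y <= x) by (assert (0 < g * x * y) by (apply Rmult_lt_0_compat; [apply Rmult_lt_0_compat|]; lra); lra).
  assert (E1 : forall z, z / (V + g) ^ 2 = z * y ^ 2) by (intros; unfold y; field; lra).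
  assert (E2 : forall z, z / (V + g) = z * y) by (intros; unfold y; field; lra).
  assert (E3 : forall z, z / V = z * x) by (intros; unfold x; field; lra).
  rewrite E1 in D. rewrite !E2, !E3.
  assert (Hmu : (2 * g * dl + g ^ 2 * (1 - mu beta q k)) * y ^ 2 <=
                (2 * g * dl + g ^ 2 * (1 - q) + g ^ 2 * dl * H) * y ^ 2).
  { apply Rmult_le_compat_r; [apply pow2_ge_0|]. assert (0 <= 1 - q) by lra. nra. }
  assert (K : (2 * g * dl + g ^ 2 * (1 - q) + g ^ 2 * dl * H) * y ^ 2 <=
     (2 * dl + g * (1 - q)) * (x - y) + g * dl * (H + / g) * (x - y) - g * dl * y * y).
  { rewrite Hxy.
    assert (0 <= (2 * dl + g * (1 - q) + g * dl * (H + / g)) * g * (x * y - y * y)).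
    { apply Rmult_le_pos; [apply Rmult_le_pos|nra].
      - assert (0 < / g) by (apply Rinv_0_lt_compat; lra). assert (0 <= 1 - q) by lra.
        assert (0 <= g * dl * (H + / g)) by (apply Rmult_le_pos; nra). nra.
      - lra. }
    replace (g * dl * (H + / g)) with (g * dl * H + dl) in * by (field; lra).
    nra. }
  replace (g * dl * (H + / (V + g) + / g)) with (g * dl * (H + / g) + g * dl * y) by (unfold y; ring).
  nra.
Qed.

Lemma dd_bound beta q k : beta > -1 -> 0 < q < 1 ->
  dd beta q k <= q * (1 - q) / 4 + (3 * del beta q + (2 + beta) * (1 - q)) / Vd beta 0.
Proof.
  intros Hb Hq.
  assert (P : Phi beta q k <= Phi beta q 0).
  { induction k; [lra|]. eapply Rle_trans; [apply Phi_step; auto| exact IHk]. }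
  assert (dd beta q k <= Phi beta q k).
  { unfold Phi. pose proof (Hs_nonneg beta k Hb). pose proof (Vd_pos beta k Hb).
    assert (0 <= del beta q) by (unfold del; nra).
    assert (0 <= (2 * del beta q + (2 + beta) * (1 - q)) / Vd beta k).
    { apply Rmult_le_pos; [nra| left; apply Rinv_0_lt_compat; lra]. }
    assert (0 <= (2 + beta) * del beta q * (Hs beta k + / (2 + beta)) / Vd beta k).
    { apply Rmult_le_pos; [|left; apply Rinv_0_lt_compat; lra].
      assert (0 < / (2 + beta)) by (apply Rinv_0_lt_compat; lra).
      apply Rmult_le_pos; nra. }
    lra. }
  assert (Phi beta q 0 = q * (1 - q) / 4 + (3 * del beta q + (2 + beta) * (1 - q)) / Vd beta 0).
  { unfold Phi, dd, mu. simpl mm; simpl ss; simpl Hs. rewrite Vd_0. unfold del. field. lra. }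
  lra.
Qed.


Lemma exp_le_mono x y : x <= y -> exp x <= exp y.
Proof. intros [H|H]; [left; apply exp_increasing; auto| subst; lra]. Qed.

Lemma exp_lower x : 0 <= x <= 1/2 -> exp (- x - 2 * x ^ 2) <= 1 - x.
Proof.
  intros Hx.
  apply Rle_trans with (exp (- (x / (1 - x)))).
  { apply exp_le_mono.
    assert (x / (1 - x) <= x + 2 * x ^ 2).
    { apply (Rmult_le_reg_r (1 - x)); [lra|]. unfold Rdiv.
      rewrite Rmult_assoc, Rinv_l by lra. nra. }
    lra. }
  rewrite exp_Ropp. pose proof (exp_ineq1_le (x / (1 - x))).
  replace (1 - x) with (/ / (1 - x)) at 2 by (field; lra).
  apply Rinv_le_contravar. { apply Rinv_0_lt_compat; lra. }
  replace (/ (1 - x)) with (1 + x / (1 - x)) by (field; lra). lra.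
Qed.

Lemma mu_exp beta q k : beta > -1 -> 0 < q < 1 -> del beta q <= 1/2 ->
  (1 + q) / 2 * exp (- (del beta q * (1 + 2 * del beta q)) * Hs beta k) <= mu beta q k <=
  (1 + q) / 2 * exp (- del beta q * Hs beta k).
Proof.
  intros Hb Hq Hd. induction k.
  - rewrite mu_0 by auto. simpl. rewrite !Rmult_0_r, exp_0. lra.
  - rewrite mu_S by auto. simpl Hs.
    set (dl := del beta q) in *. set (V := Vd beta (S k)).
    assert (HV : 1 <= V) by apply Vd_ge1, Hb.
    assert (Hdl : 0 <= dl) by (unfold dl, del; nra).
    set (x := dl / V).
    assert (Hx0 : 0 <= x) by (unfold x; apply Rmult_le_pos; [lra| left; apply Rinv_0_lt_compat; lra]).
    assert (Hx1 : x <= dl) by (unfold x; apply (Rmult_le_reg_r V); [lra|]; unfold Rdiv;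
                                rewrite Rmult_assoc, Rinv_l by lra; nra).
    assert (Hx2 : x ^ 2 <= dl * x) by nra.
    destruct IHk as [L U].
    destruct (mu_bounds beta q k Hb Hq) as [M0 M1].
    replace (- (dl * (1 + 2 * dl)) * (Hs beta k + / V)) with
      (- (dl * (1 + 2 * dl)) * Hs beta k + - ((1 + 2 * dl) * x)) by (unfold x, Rdiv; ring).
    replace (- dl * (Hs beta k + / V)) with (- dl * Hs beta k + - x) by (unfold x, Rdiv; ring).
    rewrite !exp_plus.
    split.
    + assert (E1 : exp (- ((1 + 2 * dl) * x)) <= 1 - x).
      { eapply Rle_trans; [|apply exp_lower; lra]. apply exp_le_mono. nra. }
      pose proof (exp_pos (- (dl * (1 + 2 * dl)) * Hs beta k)).
      pose proof (exp_pos (- ((1 + 2 * dl) * x))).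
      assert (0 <= (1 + q) / 2 * exp (- (dl * (1 + 2 * dl)) * Hs beta k)) by (apply Rmult_le_pos; lra).
      rewrite <- Rmult_assoc. apply Rmult_le_compat; lra.
    + assert (E1 : 1 - x <= exp (- x)) by (pose proof (exp_ineq1_le (- x)); lra).
      assert (0 <= 1 - x) by lra.
      rewrite <- Rmult_assoc. apply Rmult_le_compat; lra.
Qed.

Lemma ln_le' x y : 0 < x -> x <= y -> ln x <= ln y.
Proof. intros H [E|E]; [left; apply ln_increasing; auto| subst; lra]. Qed.

Lemma ln_diff a b : 0 < a -> 0 < b -> ln b - ln a <= (b - a) / a.
Proof.
  intros Ha Hb. replace b with (a * (b / a)) at 1 by (field; lra).
  rewrite ln_mult by (auto; apply Rdiv_lt_0_compat; auto).
  assert (ln (b / a) <= (b - a) / a).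
  { rewrite <- (ln_exp ((b - a) / a)). apply ln_le'. apply Rdiv_lt_0_compat; auto.
    pose proof (exp_ineq1_le ((b - a) / a)).
    replace (b / a) with (1 + (b - a) / a) by (field; lra). lra. }
  lra.
Qed.

Lemma Hs_bounds beta k : beta > -1 ->
  ln (Vd beta (S k)) - ln (Vd beta 1) <= (2 + beta) * Hs beta k <= ln (Vd beta k) - ln (Vd beta 0).
Proof.
  intros Hb. induction k.
  - simpl. lra.
  - simpl Hs. destruct IHk as [L U].
    pose proof (Vd_pos beta k Hb). pose proof (Vd_pos beta (S k) Hb). pose proof (Vd_pos beta (S (S k)) Hb).
    pose proof (ln_diff (Vd beta (S k)) (Vd beta (S (S k)))). pose proof (ln_diff (Vd beta (S k)) (Vd beta k)).
    rewrite (Vd_S beta (S k)) in *. rewrite (Vd_S beta k) in *.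
    replace (Vd beta k + (2 + beta) + (2 + beta) - (Vd beta k + (2 + beta))) with (2 + beta) in * by ring.
    replace (Vd beta k - (Vd beta k + (2 + beta))) with (- (2 + beta)) in * by ring.
    assert (E : (2 + beta) * (Hs beta k + / (Vd beta k + (2 + beta))) =
                (2 + beta) * Hs beta k + (2 + beta) / (Vd beta k + (2 + beta))) by (unfold Rdiv; ring).
    rewrite E. unfold Rdiv in *. rewrite Ropp_mult_distr_l_reverse in *.
    split.
    + specialize (H2 H0 H1). lra.
    + specialize (H3 H0 H). lra.
Qed.


Lemma prob_EE beta q n E : beta > -1 -> (1 <= n)%nat ->
  prob_at beta q n E = EE beta q (n - 1) (fun ps bs => if E ps bs then 1 else 0).
Proof.
  intros Hb Hn. unfold prob_at, EE. apply sumR_map_ext_in. intros pw Hp.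
  destruct (tdist_supp beta Hb _ pw Hp) as [L _]. rewrite L.
  apply sumR_map_ext_in. intros bw _. destruct (E (fst pw) (fst bw)); ring.
Qed.

Lemma prob_bound beta q n eps c0 : beta > -1 -> 0 < q < 1 -> (1 <= n)%nat -> eps > 0 ->
  0 <= prob_at beta q n (fun ps bs => Rgtb (Rabs (Y0 beta ps bs / INR n - c0)) eps) <=
  ((Vd beta (n - 1) / INR n) ^ 2 * dd beta q (n - 1)
   + (Vd beta (n - 1) / INR n * mu beta q (n - 1) - c0) ^ 2) / eps ^ 2.
Proof.
  intros Hb Hq Hn He. rewrite prob_EE by auto.
  split.
  { apply EE_nonneg; auto; [lra|]. intros. unfold Rgtb. destruct (Rlt_dec _ _); lra. }
  set (k := (n - 1)%nat).
  assert (HN : 0 < INR n) by (apply lt_0_INR; lia).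
  eapply Rle_trans.
  { apply (EE_mono beta q k _ (fun ps bs => (/ eps ^ 2 / INR n ^ 2) * Y0 beta ps bs ^ 2
            + (- 2 * c0 / INR n / eps ^ 2) * Y0 beta ps bs + (c0 ^ 2 / eps ^ 2) * 1)); auto; [lra|].
    intros ps bs. unfold Rgtb.
    set (x := Y0 beta ps bs).
    replace (/ eps ^ 2 / INR n ^ 2 * x ^ 2 + - 2 * c0 / INR n / eps ^ 2 * x + c0 ^ 2 / eps ^ 2 * 1)
      with ((x / INR n - c0) ^ 2 / eps ^ 2) by (field; lra).
    assert (0 < eps ^ 2) by nra.
    destruct (Rlt_dec eps (Rabs (x / INR n - c0))) as [Hl|Hl].
    - rewrite <- pow2_abs. apply (Rmult_le_reg_r (eps ^ 2)); auto. unfold Rdiv.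
      rewrite Rmult_assoc, Rinv_l by lra. nra.
    - apply Rmult_le_pos; [apply pow2_ge_0| left; apply Rinv_0_lt_compat; auto]. }
  rewrite !EE_plus, !EE_scal, EE_one, EE_Y2 by auto.
  change (EE beta q k (Y0 beta)) with (EE beta q k (fun ps bs => Y0 beta ps bs)).
  rewrite EE_Y by auto.
  unfold dd, mu. pose proof (Vd_pos beta k Hb). apply Req_le. field. split; lra.
Qed.

From Coquelicot Require Import Coquelicot.
Open Scope R_scope.

Lemma ev_ge (N : nat) : eventually (fun n => (N <= n)%nat).
Proof. exists N. auto. Qed.

Lemma lim_val (u : nat -> R) (a b : R) : is_lim_seq u a -> a = b -> is_lim_seq u b.
Proof. intros H ->; auto. Qed.

Lemma ln_INR_pos n : (2 <= n)%nat -> 0 < ln (INR n).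
Proof.
  intros Hn. rewrite <- ln_1. apply ln_increasing; [lra|].
  apply lt_1_INR. lia.
Qed.

Theorem corollary2 (beta c : R) (p : nat -> R) :
  beta > -1 -> c > 0 ->
  (forall n, 0 < p n < 1) ->
  Un_cv (fun n => (1 - p n) / (c / ln (INR n))) 1 ->
  forall eps, eps > 0 ->
  Un_cv (fun n => prob_at beta (p n) n
           (fun ps bs => Rgtb (Rabs (Y0 beta ps bs / INR n
                               - (2 + beta) * exp (- ((1 + beta) / (2 + beta)) * c)))
                              eps)) 0.
Proof.
  intros Hb Hc Hp Hlim eps He.
  set (c0 := (2 + beta) * exp (- ((1 + beta) / (2 + beta)) * c)).
  set (lam := (1 + beta) * c / (2 + beta)).
  assert (Hg : 1 < 2 + beta) by lra.
  assert (lnp : is_lim_seq (fun n => ln (INR n)) p_infty).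
  { apply (is_lim_comp_seq ln INR p_infty p_infty is_lim_ln_p).
    - exists 0%nat; intros; discriminate.
    - exact is_lim_seq_INR. }
  assert (S1 : is_lim_seq (fun n => (1 - p n) * ln (INR n)) c).
  { apply is_lim_seq_Reals in Hlim.
    apply (is_lim_seq_ext_loc (fun n => c * ((1 - p n) / (c / ln (INR n))))).
    { exists 2%nat. intros n Hn. pose proof (ln_INR_pos n Hn). field. split; lra. }
    apply (lim_val _ (c * 1)); [|ring].
    apply (is_lim_seq_scal_l _ c 1). exact Hlim. }
  assert (S2 : is_lim_seq (fun n => / ln (INR n)) 0).
  { replace (Finite 0) with (Rbar_inv p_infty) by reflexivity.
    apply is_lim_seq_inv; [exact lnp| discriminate]. }
  assert (S3 : is_lim_seq (fun n => 1 - p n) 0).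
  { apply (is_lim_seq_ext_loc (fun n => ((1 - p n) * ln (INR n)) * / ln (INR n))).
    { exists 2%nat. intros n Hn. pose proof (ln_INR_pos n Hn). field. lra. }
    apply (lim_val _ (c * 0)); [|ring]. apply is_lim_seq_mult'; auto. }
  assert (S3' : is_lim_seq (fun n => p n) 1).
  { apply (is_lim_seq_ext (fun n => 1 - (1 - p n))); [intros; ring|].
    apply (lim_val _ (1 - 0)); [|ring]. apply is_lim_seq_minus'; auto. apply is_lim_seq_const. }
  assert (S4 : is_lim_seq (fun n => del beta (p n)) 0).
  { apply (is_lim_seq_ext (fun n => (1 + beta) * (1 - p n))); [intros; unfold del; ring|].
    apply (lim_val _ ((1 + beta) * 0)); [|ring]. apply (is_lim_seq_scal_l _ (1 + beta) 0). auto. }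
  assert (S4' : is_lim_seq (fun n => del beta (p n) * ln (INR n)) ((1 + beta) * c)).
  { apply (is_lim_seq_ext (fun n => (1 + beta) * ((1 - p n) * ln (INR n)))); [intros; unfold del; ring|].
    apply (is_lim_seq_scal_l _ (1 + beta) c). auto. }
  assert (Dpos : forall n, 0 <= del beta (p n)).
  { intros n. unfold del. specialize (Hp n). nra. }
  assert (S5 : is_lim_seq (fun n => del beta (p n) * Hs beta (n - 1)) lam).
  { apply (is_lim_seq_le_le_loc
      (fun n => (del beta (p n) * ln (INR n) - del beta (p n) * ln (Vd beta 1)) * / (2 + beta)) _
      (fun n => (del beta (p n) * ln (INR n) + del beta (p n) * (ln (2 * (2 + beta)) - ln (Vd beta 0))) * / (2 + beta))).
    - exists 2%nat. intros n Hn. destruct n as [|m]; [lia|].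
      replace (S m - 1)%nat with m by lia.
      destruct (Hs_bounds beta m Hb) as [L U].
      pose proof (Vd_pos beta m Hb). pose proof (Vd_pos beta (S m) Hb).
      assert (HI : 0 < INR (S m)) by (apply lt_0_INR; lia).
      assert (A1 : ln (INR (S m)) <= ln (Vd beta (S m))).
      { apply ln_le'; auto. rewrite Vd_eq, S_INR. pose proof (pos_INR m). nra. }
      assert (A2 : ln (Vd beta m) <= ln (2 * (2 + beta)) + ln (INR (S m))).
      { rewrite <- ln_mult by lra. apply ln_le'; auto. rewrite Vd_eq, S_INR. pose proof (pos_INR m). nra. }
      set (dl := del beta (p (S m))). pose proof (Dpos (S m)) as Hdl. fold dl in Hdl.
      set (HH := Hs beta m) in *.
      assert (Eq : dl * HH = (dl * ((2 + beta) * HH)) * / (2 + beta)) by (field; lra).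
      rewrite Eq.
      assert (0 < / (2 + beta)) by (apply Rinv_0_lt_compat; lra).
      split; apply Rmult_le_compat_r; try lra.
      + replace (dl * ln (INR (S m)) - dl * ln (Vd beta 1)) with (dl * (ln (INR (S m)) - ln (Vd beta 1))) by ring.
        apply Rmult_le_compat_l; lra.
      + replace (dl * ln (INR (S m)) + dl * (ln (2 * (2 + beta)) - ln (Vd beta 0)))
          with (dl * (ln (INR (S m)) + (ln (2 * (2 + beta)) - ln (Vd beta 0)))) by ring.
        apply Rmult_le_compat_l; lra.
    - apply (lim_val _ (((1 + beta) * c - 0 * ln (Vd beta 1)) * / (2 + beta))); [|unfold lam; field; lra].
      apply is_lim_seq_mult'; [|apply is_lim_seq_const].
      apply is_lim_seq_minus'; auto.
      apply is_lim_seq_mult'; auto. apply is_lim_seq_const.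
    - apply (lim_val _ (((1 + beta) * c + 0 * (ln (2 * (2 + beta)) - ln (Vd beta 0))) * / (2 + beta))); [|unfold lam; field; lra].
      apply is_lim_seq_mult'; [|apply is_lim_seq_const].
      apply is_lim_seq_plus'; auto.
      apply is_lim_seq_mult'; auto. apply is_lim_seq_const. }
  assert (Cexp : forall u (l : R), is_lim_seq u l -> is_lim_seq (fun n => exp (u n)) (exp l)).
  { intros u l H. apply is_lim_seq_continuous; auto. apply derivable_continuous_pt, derivable_pt_exp. }
  assert (evd : eventually (fun n => del beta (p n) <= 1 / 2)).
  { apply is_lim_seq_spec in S4. destruct (S4 (mkposreal (1/2) ltac:(lra))) as [N HN].
    exists N. intros n Hn. specialize (HN n Hn). simpl in HN. rewrite Rminus_0_r in HN.
    apply Rabs_lt_between in HN. lra. }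
  assert (S6 : is_lim_seq (fun n => mu beta (p n) (n - 1)) (exp (- lam))).
  { apply (is_lim_seq_le_le_loc
      (fun n => (1 + p n) / 2 * exp (- ((del beta (p n) * Hs beta (n - 1)) * (1 + 2 * del beta (p n))))) _
      (fun n => (1 + p n) / 2 * exp (- (del beta (p n) * Hs beta (n - 1))))).
    - destruct evd as [N HN]. exists N. intros n Hn.
      destruct (mu_exp beta (p n) (n - 1) Hb (Hp n) (HN n Hn)) as [A B].
      split.
      + replace (- (del beta (p n) * Hs beta (n - 1) * (1 + 2 * del beta (p n)))) with
          (- (del beta (p n) * (1 + 2 * del beta (p n))) * Hs beta (n - 1)) by ring. exact A.
      + replace (- (del beta (p n) * Hs beta (n - 1))) with (- del beta (p n) * Hs beta (n - 1)) by ring. exact B.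
    - apply (lim_val _ ((1 + 1) / 2 * exp (- (lam * (1 + 2 * 0))))); [|replace (lam * (1 + 2 * 0)) with lam by ring; field].
      apply is_lim_seq_mult'.
      + apply (is_lim_seq_ext (fun n => (1 + p n) * / 2)); [intros; unfold Rdiv; ring|].
        apply is_lim_seq_mult'; [|apply is_lim_seq_const]. apply is_lim_seq_plus'; auto. apply is_lim_seq_const.
      + apply Cexp. apply (is_lim_seq_ext (fun n => -1 * (del beta (p n) * Hs beta (n - 1) * (1 + 2 * del beta (p n))))).
        { intros; ring. }
        apply (lim_val _ (-1 * (lam * (1 + 2 * 0)))); [|ring].
        apply (is_lim_seq_scal_l _ (-1) (lam * (1 + 2 * 0))).
        apply is_lim_seq_mult'; auto. apply is_lim_seq_plus'; [apply is_lim_seq_const|].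
        apply (is_lim_seq_scal_l _ 2 0). auto.
    - apply (lim_val _ ((1 + 1) / 2 * exp (- lam))); [|field].
      apply is_lim_seq_mult'.
      + apply (is_lim_seq_ext (fun n => (1 + p n) * / 2)); [intros; unfold Rdiv; ring|].
        apply is_lim_seq_mult'; [|apply is_lim_seq_const]. apply is_lim_seq_plus'; auto. apply is_lim_seq_const.
      + apply Cexp. apply (is_lim_seq_ext (fun n => -1 * (del beta (p n) * Hs beta (n - 1)))).
        { intros; ring. }
        apply (lim_val _ (-1 * lam)); [|ring].
        apply (is_lim_seq_scal_l _ (-1) lam). auto. }
  assert (S7 : is_lim_seq (fun n => Vd beta (n - 1) / INR n) (2 + beta)).
  { apply (is_lim_seq_ext_loc (fun n => (2 + beta) + beta * / INR n)).
    { exists 1%nat. intros n Hn. destruct n as [|m]; [lia|]. replace (S m - 1)%nat with m by lia.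
      rewrite Vd_eq, S_INR. pose proof (pos_INR m). field. lra. }
    apply (lim_val _ ((2 + beta) + beta * 0)); [|ring].
    apply is_lim_seq_plus'; [apply is_lim_seq_const|]. apply (is_lim_seq_scal_l _ beta 0).
    replace (Finite 0) with (Rbar_inv p_infty) by reflexivity.
    apply is_lim_seq_inv; [exact is_lim_seq_INR| discriminate]. }
  set (Dn := fun n => p n * (1 - p n) / 4 + (3 * del beta (p n) + (2 + beta) * (1 - p n)) / Vd beta 0).
  assert (S8 : is_lim_seq Dn 0).
  { unfold Dn. apply (is_lim_seq_ext (fun n => p n * (1 - p n) * / 4 + (3 * del beta (p n) + (2 + beta) * (1 - p n)) * / Vd beta 0)).
    { intros; unfold Rdiv; ring. }
    apply (lim_val _ (1 * 0 * / 4 + (3 * 0 + (2 + beta) * 0) * / Vd beta 0)); [|ring].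
    apply is_lim_seq_plus'; (apply is_lim_seq_mult'; [|apply is_lim_seq_const]).
    - apply is_lim_seq_mult'; auto.
    - apply is_lim_seq_plus'.
      + apply (is_lim_seq_scal_l _ 3 0); auto.
      + apply (is_lim_seq_scal_l _ (2 + beta) 0); auto. }
  set (nu := fun n => Vd beta (n - 1) / INR n).
  set (w := fun n => (nu n ^ 2 * Dn n + (nu n * mu beta (p n) (n - 1) - c0) ^ 2) / eps ^ 2).
  assert (S9 : is_lim_seq w 0).
  { unfold w. apply (is_lim_seq_ext (fun n => (nu n * nu n * Dn n + (nu n * mu beta (p n) (n - 1) - c0) * (nu n * mu beta (p n) (n - 1) - c0)) * / eps ^ 2)).
    { intros; unfold Rdiv; ring. }
    assert (Hc0 : c0 = (2 + beta) * exp (- lam)).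
    { unfold c0, lam. f_equal. f_equal. field. lra. }
    apply (lim_val _ (((2 + beta) * (2 + beta) * 0 + ((2 + beta) * exp (- lam) - c0) * ((2 + beta) * exp (- lam) - c0)) * / eps ^ 2)).
    2:{ rewrite Hc0. ring. }
    apply is_lim_seq_mult'; [|apply is_lim_seq_const].
    apply is_lim_seq_plus'.
    - apply is_lim_seq_mult'; auto. apply is_lim_seq_mult'; auto.
    - apply is_lim_seq_mult'; apply is_lim_seq_minus'; try apply is_lim_seq_const;
        apply is_lim_seq_mult'; auto. }
  apply is_lim_seq_Reals.
  apply (is_lim_seq_le_le_loc (fun _ => 0) _ w); [| apply is_lim_seq_const | exact S9].
  exists 1%nat. intros n Hn.
  destruct (prob_bound beta (p n) n eps c0 Hb (Hp n) Hn He) as [P1 P2].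
  split; [exact P1|]. eapply Rle_trans; [exact P2|].
  unfold w, nu, Dn. apply Rmult_le_compat_r.
  { left; apply Rinv_0_lt_compat; nra. }
  apply Rplus_le_compat_r. apply Rmult_le_compat_l; [apply pow2_ge_0|].
  apply dd_bound; auto.
Qed.
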